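(* For every 3-periodic $P_1P_2P_3$ of $\mathcal{E}$, \[\sum_{i=1}^3\frac{1}{d_{1,i}}=\frac{a^2+b^2+\delta}{ab^2},\] where $d_{1,i}=|P_i-f_1|$. Consequently the sum of distances from $f_1$ to the vertices of the focus-inversive triangle, $\sum_i |P_i^\dagger-f_1|=\rho^2\sum_i 1/d_{1,i}$, is invariant over the family.
   Context: Let $a>b>0$ and let $\mathcal{E}$ be the ellipse $x^2/a^2+y^2/b^2=1$. Set $c=\sqrt{a^2-b^2}$, $\delta=\sqrt{a^4-a^2b^2+b^4}$, and let the foci be $f_1=(-c,0)$, $f_2=(c,0)$. A 3-periodic is a triangle $P_1P_2P_3$ with vertices on $\mathcal{E}$ such that at each vertex the normal to $\mathcal{E}$ bisects the angle formed by the two sides meeting at that vertex; these form a one-parameter family (one through every point of $\mathcal{E}$). Fix $\rho>0$; the focus-inversive triangle has vertices $P_i^\dagger=f_1+(\rho/d_{1,i})^2(P_i-f_1)$. *)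

(* Defs.v *)
From Stdlib Require Import Reals Lra.
Open Scope R_scope.

Definition pt := (R * R)%type.

Definition psub (p q : pt) : pt := (fst p - fst q, snd p - snd q).
Definition dot (p q : pt) : R := fst p * fst q + snd p * snd q.
Definition norm (p : pt) : R := sqrt (dot p p).
Definition pdist (p q : pt) : R := norm (psub p q).

Definition on_ellipse (a b : R) (p : pt) : Prop :=
  (fst p)^2 / a^2 + (snd p)^2 / b^2 = 1.

(* outward normal vector to the ellipse at p (gradient of x^2/a^2+y^2/b^2, up to 2) *)
Definition ell_normal (a b : R) (p : pt) : pt := (fst p / a^2, snd p / b^2).

Definition cos_angle (u v : pt) : R := dot u v / (norm u * norm v).

(* At vertex p with neighbours q and r, the normal to the ellipse bisects the
   angle q p r: the normal makes equal angles with the sides p->q and p->r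
   (angles in [0,pi] are equal iff their cosines are equal). *)
Definition normal_bisects (a b : R) (p q r : pt) : Prop :=
  cos_angle (ell_normal a b p) (psub q p) = cos_angle (ell_normal a b p) (psub r p).

Definition three_periodic (a b : R) (P1 P2 P3 : pt) : Prop :=
  on_ellipse a b P1 /\ on_ellipse a b P2 /\ on_ellipse a b P3 /\
  P1 <> P2 /\ P2 <> P3 /\ P1 <> P3 /\
  normal_bisects a b P1 P2 P3 /\
  normal_bisects a b P2 P3 P1 /\
  normal_bisects a b P3 P1 P2.

Definition foc_c (a b : R) : R := sqrt (a^2 - b^2).
Definition delta (a b : R) : R := sqrt (a^4 - a^2 * b^2 + b^4).
Definition f1 (a b : R) : pt := (- foc_c a b, 0).
Definition f2 (a b : R) : pt := (foc_c a b, 0).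

Definition focus_inv (a b rho : R) (p : pt) : pt :=
  let k := (rho / pdist p (f1 a b))^2 in
  (fst (f1 a b) + k * (fst p - fst (f1 a b)), snd (f1 a b) + k * (snd p - snd (f1 a b))).

(* Main.v *)
Require Import Defs.
From Stdlib Require Import Reals Lra Psatz.
Open Scope R_scope.

Definition al (be k : R) := (1 + k*(1-be))^2.
Definition ga (be k : R) := -4*k*(1-be).
Definition mu (be k : R) := -2*(1-k*(1+be))*(1-k*(1-be)).
Definition nu (be k : R) := -4*k*(1-k*be).
Definition Rq be k s t := al be k*(s^2+t^2) + ga be k*s^2*t^2 + mu be k*s*t + nu be k.
Definition E0f be k p X := 2 - 2*p*X - p^2 - X^2 + 2*p^2*X^2 - k*(2*be - 2*p*X + (1-be)*(p^2+X^2)).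
Definition Bp be k p X := 1 - p*X - k*be.

Lemma Rq_identity be k p X :
  (X - p)^2 * Rq be k p X = E0f be k p X ^2 - 4*(1-p^2)*(1-X^2)*(Bp be k p X)^2.
Proof. unfold Rq, E0f, Bp, al, ga, mu, nu. ring. Qed.

Lemma R_rel be k X1 Y1 X2 Y2 :
  X1^2+Y1^2=1 -> X2^2+Y2^2=1 -> ~(X1=X2/\Y1=Y2) ->
  (1-X1*X2-Y1*Y2)^2 = k*((X1-X2)^2+be*(Y1-Y2)^2) -> Rq be k X1 X2 = 0.
Proof.
  intros c1 c2 hd h.
  destruct (Req_dec X1 X2) as [HX|HX].
  - subst X2.
    assert (HY : Y2 = - Y1).
    { assert (H0: (Y2 - Y1)*(Y2+Y1) = 0) by nra.
      apply Rmult_integral in H0. destruct H0 as [H0|H0].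
      - exfalso; apply hd; split; lra.
      - lra. }
    subst Y2.
    assert (HY1 : Y1 <> 0) by (intro; apply hd; split; lra).
    assert (HZ : Y1^2 = k*be).
    { assert (H1: (1 - X1*X1 - Y1*(-Y1)) = 2*Y1^2) by nra.
      rewrite H1 in h.
      assert (H2: Y1^2*(Y1^2 - k*be) = 0) by nra.
      apply Rmult_integral in H2. destruct H2 as [H2|H2].
      - exfalso. apply HY1. nra.
      - lra. }
    assert (HX1 : X1^2 = 1 - k*be) by lra.
    assert (E : Rq be k X1 X1 = (2*al be k+mu be k)*(X1^2) + ga be k*(X1^2)^2 + nu be k)
      by (unfold Rq; ring).
    rewrite E, HX1. unfold al, ga, mu, nu. ring.
  - assert (HE : E0f be k X1 X2 = 2*Y1*Y2*Bp be k X1 X2).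
    { assert (E : E0f be k X1 X2 - 2*Y1*Y2*Bp be k X1 X2 =
        ((1-X1*X2-Y1*Y2)^2 - k*((X1-X2)^2+be*(Y1-Y2)^2))
        - (Y2^2 - k*be)*(Y1^2+X1^2-1) - (1 - X1^2 - k*be)*(Y2^2+X2^2-1))
        by (unfold E0f, Bp; ring).
      rewrite h in E. replace (Y1^2+X1^2-1) with 0 in E by lra. replace (Y2^2+X2^2-1) with 0 in E by lra. lra. }
    assert (E : (X2 - X1)^2 * Rq be k X1 X2 = 0).
    { rewrite Rq_identity, HE.
      replace ((2 * Y1 * Y2 * Bp be k X1 X2) ^ 2) with (4 * Y1^2 * Y2^2 * Bp be k X1 X2 ^2) by ring.
      replace (Y1^2) with (1 - X1^2) by lra. replace (Y2^2) with (1-X2^2) by lra. ring. }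
    apply Rmult_integral in E. destruct E as [E|E]; auto.
    exfalso. apply HX. assert (X2 - X1 = 0) by nra. lra.
Qed.

Lemma vertex be k Xi Xj Xk :
  Rq be k Xi Xj = 0 -> Rq be k Xi Xk = 0 -> Xj <> Xk ->
  (al be k + ga be k*Xi^2)*(Xj+Xk) + mu be k*Xi = 0 /\
  (al be k + ga be k*Xi^2)*Xj*Xk = al be k*Xi^2 + nu be k.
Proof.
  intros h1 h2 hn.
  assert (S : (al be k + ga be k*Xi^2)*(Xj+Xk) + mu be k*Xi = 0).
  { assert (E : Rq be k Xi Xj - Rq be k Xi Xk = (Xj - Xk)*((al be k + ga be k*Xi^2)*(Xj+Xk) + mu be k*Xi))
      by (unfold Rq; ring).
    rewrite h1, h2 in E. replace (0-0) with 0 in E by ring.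
    symmetry in E. apply Rmult_integral in E. destruct E as [E|E]; [lra|exact E]. }
  split; [exact S|].
  assert (E : (al be k + ga be k*Xi^2)*Xj*Xk - (al be k*Xi^2 + nu be k) =
     - Rq be k Xi Xj + Xj*((al be k + ga be k*Xi^2)*(Xj+Xk) + mu be k*Xi)) by (unfold Rq; ring).
  rewrite h1, S in E. lra.
Qed.

Lemma alg be k X1 X2 X3 :
  (al be k + ga be k*X1^2)*(X2+X3) + mu be k*X1 = 0 ->
  (al be k + ga be k*X1^2)*X2*X3 = al be k*X1^2 + nu be k ->
  (al be k + ga be k*X2^2)*(X1+X3) + mu be k*X2 = 0 ->
  (al be k + ga be k*X2^2)*X1*X3 = al be k*X2^2 + nu be k ->
  X1 <> X2 ->
  ga be k * (X1*X2+X1*X3+X2*X3) = al be k - mu be k /\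
  ga be k * (X1*X2*X3) = al be k * (X1+X2+X3) /\
  al be k * (al be k - mu be k) = ga be k * nu be k.
Proof.
  intros S1 P1 S2 P2 hn.
  assert (hn' : X1 - X2 <> 0) by lra.
  assert (I : ga be k * (X1*X2+X1*X3+X2*X3) = al be k - mu be k).
  { assert (E : ((al be k + ga be k*X1^2)*(X2+X3) + mu be k*X1) -
                ((al be k + ga be k*X2^2)*(X1+X3) + mu be k*X2) =
                (X1 - X2)*(ga be k * (X1*X2+X1*X3+X2*X3) - (al be k - mu be k))) by ring.
    rewrite S1, S2 in E. replace (0-0) with 0 in E by ring.
    symmetry in E. apply Rmult_integral in E. destruct E as [E|E]; [lra|lra]. }
  split; [exact I|]. split.
  - assert (E : ((al be k + ga be k*X1^2)*X2*X3 - (al be k*X1^2 + nu be k)) -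
                ((al be k + ga be k*X2^2)*X1*X3 - (al be k*X2^2 + nu be k)) =
                (X1 - X2)*(ga be k * (X1*X2*X3) - al be k * (X1+X2+X3))) by ring.
    rewrite P1, P2 in E.
    replace (al be k * X1 ^ 2 + nu be k - (al be k * X1 ^ 2 + nu be k) -
      (al be k * X2 ^ 2 + nu be k - (al be k * X2 ^ 2 + nu be k))) with 0 in E by ring.
    symmetry in E. apply Rmult_integral in E. destruct E as [E|E]; [lra|lra].
  - assert (E : al be k * (al be k - mu be k) - ga be k * nu be k =
       - (al be k + ga be k*X1^2) * (ga be k * (X1*X2+X1*X3+X2*X3) - (al be k - mu be k))
       + ga be k * (X1 * ((al be k + ga be k*X1^2)*(X2+X3) + mu be k*X1)
                    + ((al be k + ga be k*X1^2)*X2*X3 - (al be k*X1^2 + nu be k)))) by ring.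
    rewrite S1, P1, I in E. lra.
Qed.

Lemma frac_eq a b c d : b<>0 -> d<>0 -> a*d = c*b -> a/b = c/d.
Proof. intros hb hd h. assert (E: a/b = a*d/(b*d)) by (field; auto). rewrite E, h. field; auto. Qed.

Definition Q1 be k := (1-be)^2*k^2 + 2*(1+be)*k - 3.
Definition Q2 be k := (1-be)*(be+3)*k^2 - 2*(1-be)*k - 1.
Lemma cayley_fact be k : al be k * (al be k - mu be k) - ga be k * nu be k = Q1 be k * Q2 be k.
Proof. unfold al, mu, ga, nu, Q1, Q2. ring. Qed.

Lemma final be k e dh X1 X2 X3 :
  0 < be < 1 -> 0 < k < 1 -> e^2 = 1 - be -> 0 <= e -> dh^2 = 1 - be + be^2 -> 0 <= dh ->
  -1 <= X1 <= 1 -> -1 <= X2 <= 1 -> -1 <= X3 <= 1 ->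
  ga be k * (X1*X2+X1*X3+X2*X3) = al be k - mu be k ->
  ga be k * (X1*X2*X3) = al be k * (X1+X2+X3) ->
  al be k * (al be k - mu be k) = ga be k * nu be k ->
  1/(1+e*X1) + 1/(1+e*X2) + 1/(1+e*X3) = (1+be+dh)/be.
Proof.
  intros hb hk he he0 hd hd0 h1 h2 h3 I III C.
  assert (e1 : e < 1) by nra.
  assert (p1 : 0 < 1+e*X1) by nra.
  assert (p2 : 0 < 1+e*X2) by nra.
  assert (p3 : 0 < 1+e*X3) by nra.
  assert (gneg : ga be k < 0) by (unfold ga; nra).
  assert (apos : 0 < al be k) by (unfold al; nra).
  assert (q2neg : Q2 be k < 0).
  { unfold Q2. assert (kk : k*k < k) by nra.
    assert (m : (1-be)*(be+3)*(k*k) <= (1-be)*(be+3)*k) by (apply Rmult_le_compat_l; nra).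
    assert (m2 : (1-be)*k*(be+1) < (1-be)*(be+1)) by (apply Rmult_lt_compat_r; nra).
    nra. }
  assert (q1z : Q1 be k = 0).
  { assert (E := cayley_fact be k). rewrite C in E. replace (ga be k * nu be k - ga be k * nu be k) with 0 in E by ring.
    symmetry in E. apply Rmult_integral in E. destruct E; [auto|lra]. }
  assert (hdh : 2*dh = (1-be)^2*k + 1 + be).
  { assert (E : ((1-be)^2*k + 1 + be)^2 = 4*dh^2 + (1-be)^2 * Q1 be k) by (rewrite hd; unfold Q1; ring).
    rewrite q1z in E.
    assert (u0 : 0 < (1-be)^2*k + 1 + be) by nra.
    assert (F : ((1-be)^2*k + 1 + be - 2*dh)*((1-be)^2*k + 1 + be + 2*dh) = 0) by nra.
    apply Rmult_integral in F. destruct F; lra. }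
  assert (II : al be k * (X1*X2+X1*X3+X2*X3) = nu be k).
  { assert (E : ga be k * (al be k * (X1*X2+X1*X3+X2*X3) - nu be k) = 0).
    { replace (ga be k * (al be k * (X1*X2+X1*X3+X2*X3) - nu be k)) with
        (al be k * (ga be k * (X1*X2+X1*X3+X2*X3)) - ga be k * nu be k) by ring.
      rewrite I. lra. }
    apply Rmult_integral in E. destruct E; lra. }
  set (s1 := X1+X2+X3) in *. set (s2 := X1*X2+X1*X3+X2*X3) in *. set (s3 := X1*X2*X3) in *.
  assert (ep4 : (1-be)^4 <> 0) by (apply pow_nonzero; lra).
  assert (T1 : 2*be*ga be k - (1+be+dh)*(ga be k + (1-be)*al be k) = 0).
  { replace dh with (((1-be)^2*k + 1 + be)/2) by lra.
    assert (E : (1-be)^4 * (2*be*ga be k - (1+be+((1-be)^2*k + 1 + be)/2)*(ga be k + (1-be)*al be k))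
      = (1-be) * ((-1)*k*be^6 + (6)*k*be^5 + (-15)*k*be^4 + (20)*k*be^3 + (-15)*k*be^2 + (6)*k*be + (-1)*k + (1)*be^5 + (-3)*be^4 + (2)*be^3 + (2)*be^2 + (-3)*be + (1)) * Q1 be k / 2)
      by (unfold ga, al, Q1; field).
    rewrite q1z in E. replace ((1 - be) * ((-1)*k*be^6 + (6)*k*be^5 + (-15)*k*be^4 + (20)*k*be^3 + (-15)*k*be^2 + (6)*k*be + (-1)*k + (1)*be^5 + (-3)*be^4 + (2)*be^3 + (2)*be^2 + (-3)*be + (1)) * 0 / 2) with 0 in E by field.
    apply Rmult_integral in E. destruct E; [contradiction|auto]. }
  assert (T2 : be*(3 + (1-be)*s2) - (1+be+dh)*(1 + (1-be)*s2) = 0).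
  { replace dh with (((1-be)^2*k + 1 + be)/2) by lra.
    assert (E : (1-be)^4 * (2 * al be k * (be*(3 + (1-be)*s2) - (1+be+((1-be)^2*k + 1 + be)/2)*(1 + (1-be)*s2)))
      = ((3)*k*be^6 + (-14)*k*be^5 + (25)*k*be^4 + (-20)*k*be^3 + (5)*k*be^2 + (2)*k*be + (-1)*k + (-1)*be^5 + (5)*be^4 + (-10)*be^3 + (10)*be^2 + (-5)*be + (1)) * Q1 be k
        + (1-be)^4 * (2*be*(1-be) - (3+3*be+(1-be)^2*k)*(1-be)) * (al be k * s2 - nu be k))
      by (unfold al, nu, Q1; field).
    rewrite q1z, II in E. replace (((3)*k*be^6 + (-14)*k*be^5 + (25)*k*be^4 + (-20)*k*be^3 + (5)*k*be^2 + (2)*k*be + (-1)*k + (-1)*be^5 + (5)*be^4 + (-10)*be^3 + (10)*be^2 + (-5)*be + (1)) * 0 +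
        (1-be)^4 * (2*be*(1-be) - (3+3*be+(1-be)^2*k)*(1-be)) * (nu be k - nu be k)) with 0 in E by ring.
    apply Rmult_integral in E. destruct E as [E|E]; [contradiction|].
    apply Rmult_integral in E. destruct E as [E|E]; [lra|auto]. }
  assert (Key : be*(3 + 2*e*s1 + (1-be)*s2) = (1+be+dh)*(1 + e*s1 + (1-be)*s2 + e*(1-be)*s3)).
  { assert (E : ga be k * (be*(3 + 2*e*s1 + (1-be)*s2) - (1+be+dh)*(1 + e*s1 + (1-be)*s2 + e*(1-be)*s3))
       = ga be k * (be*(3 + (1-be)*s2) - (1+be+dh)*(1 + (1-be)*s2))
         + e*s1*(2*be*ga be k - (1+be+dh)*(ga be k + (1-be)*al be k))
         + (1+be+dh)*e*(1-be)*(al be k * s1 - ga be k * s3)) by ring.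
    rewrite T1, T2, III in E.
    replace (ga be k * 0 + e * s1 * 0 + (1 + be + dh) * e * (1 - be) * (al be k * s1 - al be k * s1)) with 0 in E by ring.
    apply Rmult_integral in E. destruct E; lra. }
  replace (1/(1+e*X1) + 1/(1+e*X2) + 1/(1+e*X3)) with
    (((1+e*X2)*(1+e*X3) + (1+e*X1)*(1+e*X3) + (1+e*X1)*(1+e*X2)) / ((1+e*X1)*(1+e*X2)*(1+e*X3)))
    by (field; repeat split; lra).
  apply frac_eq.
  - apply Rgt_not_eq. apply Rmult_gt_0_compat; [apply Rmult_gt_0_compat|]; lra.
  - lra.
  - replace ((1+e*X2)*(1+e*X3) + (1+e*X1)*(1+e*X3) + (1+e*X1)*(1+e*X2)) with (3 + 2*e*s1 + e^2*s2)
      by (unfold s1, s2; ring).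
    replace ((1+e*X1)*(1+e*X2)*(1+e*X3)) with (1 + e*s1 + e^2*s2 + e*e^2*s3) by (unfold s1,s2,s3; ring).
    rewrite he. lra.
Qed.

Definition T (X1 Y1 X2 Y2 : R) := 1 - X1*X2 - Y1*Y2.
Definition DD be (X1 Y1 X2 Y2 : R) := (X1-X2)^2 + be*(Y1-Y2)^2.
Definition Rel be k X1 Y1 X2 Y2 := (T X1 Y1 X2 Y2)^2 = k * DD be X1 Y1 X2 Y2.

Lemma sq_pos x : x <> 0 -> 0 < x^2.
Proof. intro h. generalize (Rlt_0_sqr x h). unfold Rsqr. intro. replace (x^2) with (x*x) by ring. lra. Qed.

Lemma sq0 x : x^2 = 0 -> x = 0.
Proof. intro h. apply Rsqr_eq_0. unfold Rsqr. rewrite <- h. ring. Qed.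

Lemma Rel_sym be k X1 Y1 X2 Y2 : Rel be k X1 Y1 X2 Y2 -> Rel be k X2 Y2 X1 Y1.
Proof. unfold Rel, T, DD. intro h. replace (1 - X2*X1 - Y2*Y1) with (1 - X1*X2 - Y1*Y2) by ring.
  rewrite h. ring. Qed.

Lemma T_pos X1 Y1 X2 Y2 : X1^2+Y1^2=1 -> X2^2+Y2^2=1 -> ~(X1=X2/\Y1=Y2) -> 0 < T X1 Y1 X2 Y2.
Proof. intros c1 c2 hd. unfold T.
  assert (E : 2*(1 - X1*X2 - Y1*Y2) = (X1-X2)^2 + (Y1-Y2)^2) by nra.
  destruct (Req_dec X1 X2) as [h|h].
  - assert (Y1 - Y2 <> 0) by (intro; apply hd; split; lra).
    assert (0 < (Y1-Y2)^2) by (apply sq_pos; auto). nra.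
  - assert (X1 - X2 <> 0) by lra.
    assert (0 < (X1-X2)^2) by (apply sq_pos; auto). nra.
Qed.

Lemma Rq_of be k X1 Y1 X2 Y2 : X1^2+Y1^2=1 -> X2^2+Y2^2=1 -> ~(X1=X2/\Y1=Y2) ->
  Rel be k X1 Y1 X2 Y2 -> Rq be k X1 X2 = 0.
Proof. intros. apply (R_rel be k X1 Y1 X2 Y2); auto. Qed.

Lemma Gneg be k X1 Y1 X2 Y2 : 0 < be < 1 -> 1 <= k -> X1^2+Y1^2=1 -> X2^2+Y2^2=1 -> ~(X1=X2/\Y1=Y2) ->
  Rel be k X1 Y1 X2 Y2 ->
  Y1*Y2 <= 0 /\ (Y1*Y2 = 0 -> X1 = -X2 /\ Y1 = 0 /\ Y2 = 0).
Proof.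
  intros hb hk c1 c2 hd h.
  assert (tp := T_pos X1 Y1 X2 Y2 c1 c2 hd).
  unfold Rel in h.
  assert (F : DD be X1 Y1 X2 Y2 - (T X1 Y1 X2 Y2)^2 =
     T X1 Y1 X2 Y2 * (2*Y1*Y2 + be*(1+X1*X2-Y1*Y2))
     + ((-1)*Y2^2*be + (1)*Y2^2 + (1)*be)*(Y1^2+X1^2-1) + ((1)*X1^2*be + (-1)*X1^2 + (1))*(Y2^2+X2^2-1))
     by (unfold DD, T; ring).
  replace (Y1^2+X1^2-1) with 0 in F by lra. replace (Y2^2+X2^2-1) with 0 in F by lra.
  assert (ddp : 0 <= DD be X1 Y1 X2 Y2) by (unfold DD; apply Rplus_le_le_0_compat; [apply pow2_ge_0| apply Rmult_le_pos; [lra|apply pow2_ge_0]]).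
  assert (G : 2*Y1*Y2 + be*(1+X1*X2-Y1*Y2) <= 0).
  { assert (T X1 Y1 X2 Y2 * (2*Y1*Y2 + be*(1+X1*X2-Y1*Y2)) <= 0) by nra. nra. }
  assert (EN : (X1+X2)^2+(Y1-Y2)^2 = 2*(1+X1*X2-Y1*Y2)) by nra.
  assert (N : 0 <= 1+X1*X2-Y1*Y2) by (generalize (pow2_ge_0 (X1+X2)) (pow2_ge_0 (Y1-Y2)); lra).
  assert (BN : 0 <= be*(1+X1*X2-Y1*Y2)) by (apply Rmult_le_pos; lra).
  split; [lra|].
  intro z.
  assert (N0 : 1+X1*X2-Y1*Y2 = 0).
  { assert (BN0 : be*(1+X1*X2-Y1*Y2) = 0) by lra.
    apply Rmult_integral in BN0. destruct BN0 as [u|u]; lra. }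
  assert (E2 : (X1+X2)^2 + (Y1-Y2)^2 = 0) by lra.
  generalize (pow2_ge_0 (X1+X2)) (pow2_ge_0 (Y1-Y2)); intros q1 q2.
  assert (a1 : X1 + X2 = 0) by (apply sq0; lra). assert (a2 : Y1 - Y2 = 0) by (apply sq0; lra).
  assert (Y1 = 0) by nra. split; [lra|split; lra].
Qed.

Lemma klt1 be k X1 Y1 X2 Y2 X3 Y3 : 0 < be < 1 ->
  X1^2+Y1^2=1 -> X2^2+Y2^2=1 -> X3^2+Y3^2=1 ->
  ~(X1=X2/\Y1=Y2) -> ~(X1=X3/\Y1=Y3) -> ~(X2=X3/\Y2=Y3) ->
  Rel be k X1 Y1 X2 Y2 -> Rel be k X1 Y1 X3 Y3 -> Rel be k X2 Y2 X3 Y3 -> k < 1.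
Proof.
  intros hb c1 c2 c3 d12 d13 d23 r12 r13 r23.
  destruct (Rlt_or_le k 1) as [h|h]; [auto|exfalso].
  destruct (Gneg be k X1 Y1 X2 Y2 hb h c1 c2 d12 r12) as [g12 z12].
  destruct (Gneg be k X1 Y1 X3 Y3 hb h c1 c3 d13 r13) as [g13 z13].
  destruct (Gneg be k X2 Y2 X3 Y3 hb h c2 c3 d23 r23) as [g23 z23].
  destruct (Req_dec (Y1*Y2) 0) as [e12|e12].
  { destruct (z12 e12) as [a [b c]].
    assert (e13 : Y1*Y3 = 0) by (rewrite b; ring).
    destruct (z13 e13) as [a' [b' c']].
    assert (e23 : Y2*Y3 = 0) by (rewrite c; ring).
    destruct (z23 e23) as [a'' [b'' c'']].
    assert (X1 = 0) by lra. nra. }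
  destruct (Req_dec (Y1*Y3) 0) as [e13|e13].
  { destruct (z13 e13) as [a [b c]]. apply e12. rewrite b. ring. }
  destruct (Req_dec (Y2*Y3) 0) as [e23|e23].
  { destruct (z23 e23) as [a [b c]]. apply e12. rewrite b. ring. }
  assert (l12 : Y1*Y2 < 0) by lra. assert (l13 : Y1*Y3 < 0) by lra. assert (l23 : Y2*Y3 < 0) by lra.
  assert (P : 0 < (Y1*Y2)*(Y1*Y3)) by nra.
  assert (Q : (Y1*Y2)*(Y1*Y3)*(Y2*Y3) < 0) by nra.
  assert (E : (Y1*Y2)*(Y1*Y3)*(Y2*Y3) = (Y1*Y2*Y3)^2) by ring.
  assert (0 <= (Y1*Y2*Y3)^2) by nra. lra.
Qed.

Definition VR be k Xi Xj Xk :=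
  (al be k + ga be k*Xi^2)*(Xj+Xk) + mu be k*Xi = 0 /\
  (al be k + ga be k*Xi^2)*Xj*Xk = al be k*Xi^2 + nu be k.

Lemma apex be k XA YA XB YB XC YC : 0 < be < 1 -> 0 < k ->
  XA^2+YA^2=1 -> XB^2+YB^2=1 -> XC^2+YC^2=1 ->
  ~(XA=XB/\YA=YB) -> ~(XA=XC/\YA=YC) -> ~(XB=XC/\YB=YC) ->
  Rel be k XA YA XB YB -> Rel be k XA YA XC YC -> Rel be k XB YB XC YC -> XB = XC ->
  VR be k XA XB XC /\ VR be k XB XA XC /\ XA <> XB.
Proof.
  intros hb hk cA cB cC dAB dAC dBC rAB rAC rBC hx.
  assert (vB : VR be k XB XA XC -> VR be k XB XA XC) by auto.
  subst XC.
  assert (hy : YC = - YB).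
  { assert (H0: (YC - YB)*(YC+YB) = 0) by nra.
    apply Rmult_integral in H0. destruct H0 as [H0|H0].
    - exfalso; apply dBC; split; lra.
    - lra. }
  subst YC.
  assert (yB : YB <> 0) by (intro; apply dBC; split; lra).
  assert (tAB := T_pos _ _ _ _ cA cB dAB).
  assert (tAC := T_pos _ _ _ _ cA cC dAC).
  assert (FB : DD be XA YA XB YB = T XA YA XB YB * (2*be + (1-be)*T XA YA XB (-YB))).
  { assert (E : DD be XA YA XB YB - T XA YA XB YB * (2*be + (1-be)*T XA YA XB (-YB)) =
       ((-1)*YB^2*be + (1)*YB^2 + (1)*be)*(YA^2+XA^2-1) + ((1)*XA^2*be + (-1)*XA^2 + (1))*(YB^2+XB^2-1))
      by (unfold DD, T; ring).
    replace (YA^2+XA^2-1) with 0 in E by lra. replace (YB^2+XB^2-1) with 0 in E by lra. lra. }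
  assert (FC : DD be XA YA XB (-YB) = T XA YA XB (-YB) * (2*be + (1-be)*T XA YA XB YB)).
  { assert (E : DD be XA YA XB (-YB) - T XA YA XB (-YB) * (2*be + (1-be)*T XA YA XB YB) =
       ((-1)*YB^2*be + (1)*YB^2 + (1)*be)*(YA^2+XA^2-1) + ((1)*XA^2*be + (-1)*XA^2 + (1))*(YB^2+XB^2-1))
      by (unfold DD, T; ring).
    replace (YA^2+XA^2-1) with 0 in E by lra. replace (YB^2+XB^2-1) with 0 in E by lra. lra. }
  unfold Rel in rAB, rAC. rewrite FB in rAB. rewrite FC in rAC.
  assert (eB : T XA YA XB YB = k * (2*be + (1-be)*T XA YA XB (-YB))).
  { assert (E : T XA YA XB YB * (T XA YA XB YB - k * (2*be + (1-be)*T XA YA XB (-YB))) = 0) by nra.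
    apply Rmult_integral in E. destruct E; lra. }
  assert (eC : T XA YA XB (-YB) = k * (2*be + (1-be)*T XA YA XB YB)).
  { assert (E : T XA YA XB (-YB) * (T XA YA XB (-YB) - k * (2*be + (1-be)*T XA YA XB YB)) = 0) by nra.
    apply Rmult_integral in E. destruct E; lra. }
  assert (eq : T XA YA XB YB = T XA YA XB (-YB)).
  { assert (E : (T XA YA XB YB - T XA YA XB (-YB)) * (1 + k*(1-be)) = 0) by nra.
    apply Rmult_integral in E. destruct E; nra. }
  unfold T in eq.
  assert (yA : YA = 0).
  { assert (E : YA * YB = 0) by lra. apply Rmult_integral in E. destruct E; [auto|contradiction]. }
  subst YA.
  assert (xB1 : XB^2 < 1) by (assert (0 < YB^2) by (apply sq_pos; auto); lra).
  assert (xA : XA = 1 \/ XA = -1).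
  { assert (E : (XA - 1)*(XA+1) = 0) by nra. apply Rmult_integral in E. destruct E; [left|right]; lra. }
  assert (nAB : XA <> XB) by (intro; subst; destruct xA; subst; nra).
  split; [|split; [|exact nAB]].
  - unfold VR.
    destruct xA as [xA|xA]; subst XA.
    + assert (h : (1-XB)*((1-XB)*(1-k*(1-be)) - 2*k*be) = 0).
      { unfold DD, T in rAB. replace (YB^2) with (1 - XB^2) in rAB by lra.
        replace (YB*YB) with (1 - XB^2) in rAB by nra. nra. }
      apply Rmult_integral in h. destruct h as [h|h]; [exfalso; nra|].
      assert (w : (1-k*(1-be))*XB = 1 - k*(1-be) - 2*k*be) by lra.
      split.
      * replace ((al be k + ga be k * 1 ^ 2) * (XB + XB) + mu be k * 1) with
          (2*(1-k*(1-be))*((1-k*(1-be))*XB) + mu be k) by (unfold al, ga; ring).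
        rewrite w. unfold mu. ring.
      * replace ((al be k + ga be k * 1 ^ 2) * XB * XB) with (((1-k*(1-be))*XB)^2) by (unfold al, ga; ring).
        rewrite w. unfold al, nu. ring.
    + assert (h : (1+XB)*((1+XB)*(1-k*(1-be)) - 2*k*be) = 0).
      { unfold DD, T in rAB. replace (YB^2) with (1 - XB^2) in rAB by lra.
        replace (YB*YB) with (1 - XB^2) in rAB by nra. nra. }
      apply Rmult_integral in h. destruct h as [h|h]; [exfalso; nra|].
      assert (w : (1-k*(1-be))*XB = 2*k*be - (1 - k*(1-be))) by lra.
      split.
      * replace ((al be k + ga be k * (-1) ^ 2) * (XB + XB) + mu be k * (-1)) with
          (2*(1-k*(1-be))*((1-k*(1-be))*XB) - mu be k) by (unfold al, ga; ring).
        rewrite w. unfold mu. ring.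
      * replace ((al be k + ga be k * (-1) ^ 2) * XB * XB) with (((1-k*(1-be))*XB)^2) by (unfold al, ga; ring).
        rewrite w. unfold al, nu. ring.
  - apply vertex.
    + apply (Rq_of be k XB YB XA 0); auto.
      * intro h; apply dAB; destruct h; split; auto.
      * apply Rel_sym. unfold Rel. rewrite FB. exact rAB.
    + apply (Rq_of be k XB YB XB (-YB)); auto.
    + auto.
Qed.

Definition Concl be k X1 X2 X3 :=
  ga be k * (X1*X2+X1*X3+X2*X3) = al be k - mu be k /\
  ga be k * (X1*X2*X3) = al be k * (X1+X2+X3) /\
  al be k * (al be k - mu be k) = ga be k * nu be k.

Lemma alg' be k X1 X2 X3 : VR be k X1 X2 X3 -> VR be k X2 X1 X3 -> X1 <> X2 -> Concl be k X1 X2 X3.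
Proof. intros [a b] [c d] n. apply alg; auto. Qed.

Lemma Concl_perm1 be k X1 X2 X3 : Concl be k X2 X1 X3 -> Concl be k X1 X2 X3.
Proof. unfold Concl. intros [a [b c]]. split; [|split]; auto.
  - rewrite <- a. ring.
  - replace (X1*X2*X3) with (X2*X1*X3) by ring. rewrite b. ring. Qed.

Lemma Concl_perm2 be k X1 X2 X3 : Concl be k X1 X3 X2 -> Concl be k X1 X2 X3.
Proof. unfold Concl. intros [a [b c]]. split; [|split]; auto.
  - rewrite <- a. ring.
  - replace (X1*X2*X3) with (X1*X3*X2) by ring. rewrite b. ring. Qed.

Lemma core be k e dh X1 Y1 X2 Y2 X3 Y3 :
  0 < be < 1 -> 0 < k -> e^2 = 1 - be -> 0 <= e -> dh^2 = 1 - be + be^2 -> 0 <= dh ->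
  X1^2+Y1^2=1 -> X2^2+Y2^2=1 -> X3^2+Y3^2=1 ->
  ~(X1=X2/\Y1=Y2) -> ~(X1=X3/\Y1=Y3) -> ~(X2=X3/\Y2=Y3) ->
  Rel be k X1 Y1 X2 Y2 -> Rel be k X1 Y1 X3 Y3 -> Rel be k X2 Y2 X3 Y3 ->
  1/(1+e*X1) + 1/(1+e*X2) + 1/(1+e*X3) = (1+be+dh)/be.
Proof.
  intros hb hk he he0 hd hd0 c1 c2 c3 d12 d13 d23 r12 r13 r23.
  assert (kl := klt1 be k X1 Y1 X2 Y2 X3 Y3 hb c1 c2 c3 d12 d13 d23 r12 r13 r23).
  assert (CC : Concl be k X1 X2 X3).
  { destruct (Req_dec X2 X3) as [h23|h23].
    - destruct (apex be k X1 Y1 X2 Y2 X3 Y3 hb hk c1 c2 c3 d12 d13 d23 r12 r13 r23 h23) as [v1 [v2 n]].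
      apply alg'; auto.
    - destruct (Req_dec X1 X3) as [h13|h13].
      + assert (d21 : ~(X2=X1/\Y2=Y1)) by (intros [u v]; apply d12; split; auto).
        destruct (apex be k X2 Y2 X1 Y1 X3 Y3 hb hk c2 c1 c3 d21 d23 d13 (Rel_sym _ _ _ _ _ _ r12) r23 r13 h13)
          as [v2 [v1 n]].
        apply alg'; auto.
      + destruct (Req_dec X1 X2) as [h12|h12].
        * assert (d31 : ~(X3=X1/\Y3=Y1)) by (intros [u v]; apply d13; split; auto).
          assert (d32 : ~(X3=X2/\Y3=Y2)) by (intros [u v]; apply d23; split; auto).
          destruct (apex be k X3 Y3 X1 Y1 X2 Y2 hb hk c3 c1 c2 d31 d32 d12
             (Rel_sym _ _ _ _ _ _ r13) (Rel_sym _ _ _ _ _ _ r23) r12 h12) as [v3 [v1 n]].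
          apply Concl_perm2. apply alg'; auto.
        * apply alg'.
          -- apply vertex; [apply (Rq_of be k X1 Y1 X2 Y2)| apply (Rq_of be k X1 Y1 X3 Y3)|]; auto.
          -- apply vertex; [apply (Rq_of be k X2 Y2 X1 Y1)| apply (Rq_of be k X2 Y2 X3 Y3)|]; auto.
             ++ intros [u v]; apply d12; split; auto.
             ++ apply Rel_sym; auto.
          -- auto. }
  destruct CC as [I [III C]].
  apply (final be k e dh X1 X2 X3); auto; split; nra.
Qed.

Lemma dot_nonneg p : 0 <= dot p p.
Proof. unfold dot. generalize (pow2_ge_0 (fst p)) (pow2_ge_0 (snd p)). simpl. nra. Qed.

Lemma norm_sq p : norm p ^ 2 = dot p p.
Proof. unfold norm. apply pow2_sqrt. apply dot_nonneg. Qed.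

Lemma norm_pos p : 0 < dot p p -> 0 < norm p.
Proof. intro h. unfold norm. apply sqrt_lt_R0. auto. Qed.

Lemma dot_pos_of x y : ~(x = 0 /\ y = 0) -> 0 < dot (x,y) (x,y).
Proof. intro h. unfold dot; simpl.
  destruct (Req_dec x 0) as [hx|hx].
  - assert (y <> 0) by (intro; apply h; auto). assert (0 < y^2) by (apply sq_pos; auto). nra.
  - assert (0 < x^2) by (apply sq_pos; auto). generalize (pow2_ge_0 y). nra.
Qed.

Lemma bis a b x1 y1 x2 y2 x3 y3 : 0 < a -> 0 < b ->
  x1^2/a^2 + y1^2/b^2 = 1 ->
  ~(x1 = x2 /\ y1 = y2) -> ~(x1 = x3 /\ y1 = y3) ->
  normal_bisects a b (x1,y1) (x2,y2) (x3,y3) ->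
  T (x1/a) (y1/b) (x2/a) (y2/b) / norm (psub (x2,y2) (x1,y1)) =
  T (x1/a) (y1/b) (x3/a) (y3/b) / norm (psub (x3,y3) (x1,y1)).
Proof.
  intros ha hb c1 d12 d13 h.
  unfold normal_bisects, cos_angle in h.
  assert (Hd : forall x y, dot (ell_normal a b (x1,y1)) (psub (x,y) (x1,y1)) = - T (x1/a) (y1/b) (x/a) (y/b)).
  { intros x y. unfold dot, ell_normal, psub, T; cbn [fst snd].
    assert (E : x1/a^2*(x-x1) + y1/b^2*(y-y1) + (1 - x1/a*(x/a) - y1/b*(y/b)) = 1 - (x1^2/a^2+y1^2/b^2))
      by (field; split; lra).
    rewrite c1 in E. lra. }
  rewrite !Hd in h.
  assert (nN : 0 < norm (ell_normal a b (x1,y1))).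
  { apply norm_pos. unfold ell_normal; cbn [fst snd]. apply dot_pos_of.
    intros [u v]. assert (x1 = 0). { assert (x1 = x1/a^2*a^2) by (field; lra). rewrite u in H. lra. }
    assert (y1 = 0). { assert (y1 = y1/b^2*b^2) by (field; lra). rewrite v in H0. lra. }
    subst. exfalso. assert (Z : 0^2/a^2 + 0^2/b^2 = 0) by (field; lra). lra. }
  assert (n2 : 0 < norm (psub (x2,y2) (x1,y1))).
  { apply norm_pos. unfold psub; cbn [fst snd]. apply dot_pos_of. intros [u v]. apply d12; split; lra. }
  assert (n3 : 0 < norm (psub (x3,y3) (x1,y1))).
  { apply norm_pos. unfold psub; cbn [fst snd]. apply dot_pos_of. intros [u v]. apply d13; split; lra. }
  set (N := norm (ell_normal a b (x1,y1))) in *.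
  set (L2 := norm (psub (x2,y2) (x1,y1))) in *.
  set (L3 := norm (psub (x3,y3) (x1,y1))) in *.
  replace (T (x1/a) (y1/b) (x2/a) (y2/b) / L2) with (- N * (- T (x1/a) (y1/b) (x2/a) (y2/b) / (N * L2))) by (field; lra).
  rewrite h. field; lra.
Qed.

Lemma foc_sq a b : 0 < b < a -> foc_c a b ^ 2 = a^2 - b^2 /\ 0 <= foc_c a b.
Proof. intros h. unfold foc_c. split. apply pow2_sqrt. nra. apply sqrt_pos. Qed.

Lemma delta_sq a b : delta a b ^ 2 = a^4 - a^2*b^2 + b^4 /\ 0 <= delta a b.
Proof. unfold delta. split. apply pow2_sqrt. generalize (pow2_ge_0 (a^2-b^2)) (pow2_ge_0 (a*b)). nra. apply sqrt_pos. Qed.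

Lemma dist_f1 a b x y : 0 < b < a -> x^2/a^2+y^2/b^2=1 ->
  pdist (x,y) (f1 a b) = a * (1 + (foc_c a b / a) * (x/a)) /\ 0 < 1 + (foc_c a b / a) * (x/a).
Proof.
  intros h c1. destruct (foc_sq a b h) as [hc hc0].
  set (c := foc_c a b) in *.
  assert (hy : y^2 = b^2 - b^2*x^2/a^2).
  { assert (E : y^2 = b^2 * (x^2/a^2 + y^2/b^2) - b^2*x^2/a^2) by (field; lra). rewrite c1 in E. lra. }
  assert (hX : (x/a)^2 <= 1).
  { assert (E : (x/a)^2 = x^2/a^2) by (field; lra). rewrite E.
    assert (0 <= y^2/b^2) by (apply Rmult_le_pos; [apply pow2_ge_0|]; left; apply Rinv_0_lt_compat; nra). lra. }
  assert (he : c/a < 1).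
  { assert (c < a) by nra. apply (Rmult_lt_reg_r a); [lra|]. field_simplify; lra. }
  assert (he0 : 0 <= c/a) by (apply Rmult_le_pos; [lra|left; apply Rinv_0_lt_compat; lra]).
  assert (pos : 0 < 1 + c/a*(x/a)).
  { assert (-1 <= x/a <= 1) by nra. nra. }
  split; [|exact pos].
  unfold pdist, norm, dot, psub, f1. cbn [fst snd]. fold c.
  replace ((x - - c) * (x - - c) + (y - 0) * (y - 0)) with ((a * (1 + c/a*(x/a)))^2).
  - apply sqrt_pow2. nra.
  - replace ((x - - c) * (x - - c) + (y - 0) * (y - 0)) with (x^2 + 2*c*x + c^2 + y^2) by ring.
    replace ((a * (1 + c/a*(x/a)))^2) with (a^2 + 2*c*x + c^2*x^2/a^2) by (field; lra).
    rewrite hy, hc. field. lra.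
Qed.

Lemma focus_inv_dist a b rho P : 0 < pdist P (f1 a b) ->
  pdist (focus_inv a b rho P) (f1 a b) = rho^2 / pdist P (f1 a b).
Proof.
  intro hd. set (d := pdist P (f1 a b)) in *.
  unfold focus_inv. fold d. set (kk := (rho/d)^2).
  assert (kk0 : 0 <= kk) by (unfold kk; apply pow2_ge_0).
  unfold pdist, norm, dot, psub. cbn [fst snd].
  replace ((fst (f1 a b) + kk * (fst P - fst (f1 a b)) - fst (f1 a b)) *
    (fst (f1 a b) + kk * (fst P - fst (f1 a b)) - fst (f1 a b)) +
    (snd (f1 a b) + kk * (snd P - snd (f1 a b)) - snd (f1 a b)) *
    (snd (f1 a b) + kk * (snd P - snd (f1 a b)) - snd (f1 a b)))
   with ((kk * d)^2).
  - rewrite sqrt_pow2 by (apply Rmult_le_pos; lra). unfold kk. field. lra.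
  - assert (Ed : d^2 = (fst P - fst (f1 a b)) * (fst P - fst (f1 a b)) + (snd P - snd (f1 a b)) * (snd P - snd (f1 a b))).
    { unfold d, pdist. rewrite norm_sq. unfold dot, psub. cbn [fst snd]. ring. }
    replace ((kk*d)^2) with (kk^2 * d^2) by ring. rewrite Ed. ring.
Qed.

Lemma norm_psub_sym p q : norm (psub p q) = norm (psub q p).
Proof. unfold norm, dot, psub. cbn [fst snd]. f_equal. ring. Qed.

Lemma circ a b x y : 0 < a -> 0 < b -> x^2/a^2+y^2/b^2=1 -> (x/a)^2 + (y/b)^2 = 1.
Proof. intros. rewrite <- H1. field. split; lra. Qed.

Lemma dist_norm a b x1 y1 x2 y2 : 0 < a -> 0 < b -> ~(x1 = x2 /\ y1 = y2) -> ~(x1/a = x2/a /\ y1/b = y2/b).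
Proof. intros ha hb h [u v]. apply h. split.
  - assert (x1 = x1/a*a) by (field; lra). assert (x2 = x2/a*a) by (field; lra). rewrite H, H0, u. auto.
  - assert (y1 = y1/b*b) by (field; lra). assert (y2 = y2/b*b) by (field; lra). rewrite H, H0, v. auto.
Qed.

Lemma L_sq a b x1 y1 x2 y2 : 0 < a -> 0 < b ->
  norm (psub (x2,y2) (x1,y1)) ^ 2 = a^2 * DD (b^2/a^2) (x1/a) (y1/b) (x2/a) (y2/b).
Proof. intros. rewrite norm_sq. unfold dot, psub, DD. cbn [fst snd]. field. split; lra. Qed.

Lemma L_pos x1 y1 x2 y2 : ~(x1 = x2 /\ y1 = y2) -> 0 < norm (psub (x2,y2) (x1,y1)).
Proof. intro h. apply norm_pos. unfold psub; cbn [fst snd]. apply dot_pos_of. intros [u v]; apply h; split; lra. Qed.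

Lemma be_bounds a b : 0 < b < a -> 0 < b^2/a^2 < 1.
Proof. intros h. split. apply Rdiv_lt_0_compat; nra.
  apply (Rmult_lt_reg_r (a^2)); [nra|]. field_simplify; nra. Qed.

Lemma e_facts a b : 0 < b < a -> (foc_c a b / a)^2 = 1 - b^2/a^2 /\ 0 <= foc_c a b / a.
Proof. intros h. destruct (foc_sq a b h) as [hc hc0]. split.
  - replace ((foc_c a b / a)^2) with (foc_c a b ^2 / a^2) by (field; lra). rewrite hc. field; lra.
  - apply Rmult_le_pos; [lra|left; apply Rinv_0_lt_compat; lra]. Qed.

Lemma dh_facts a b : 0 < b < a -> (delta a b / a^2)^2 = 1 - b^2/a^2 + (b^2/a^2)^2 /\ 0 <= delta a b / a^2.
Proof. intros h. destruct (delta_sq a b) as [hd hd0]. split.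
  - replace ((delta a b / a^2)^2) with (delta a b ^2 / a^4) by (field; lra). rewrite hd. field; lra.
  - apply Rmult_le_pos; [lra|left; apply Rinv_0_lt_compat; nra]. Qed.

Lemma finish a b rho e X1 X2 X3 dl (P1 P2 P3 : pt) : 0 < a -> 0 < b ->
  0 < 1 + e*X1 -> 0 < 1 + e*X2 -> 0 < 1 + e*X3 ->
  1/(1+e*X1) + 1/(1+e*X2) + 1/(1+e*X3) = (1 + b^2/a^2 + dl/a^2)/(b^2/a^2) ->
  pdist P1 (f1 a b) = a * (1 + e*X1) -> pdist P2 (f1 a b) = a * (1 + e*X2) -> pdist P3 (f1 a b) = a * (1 + e*X3) ->
  1 / pdist P1 (f1 a b) + 1 / pdist P2 (f1 a b) + 1 / pdist P3 (f1 a b)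
    = (a^2 + b^2 + dl) / (a * b^2)
  /\ pdist (focus_inv a b rho P1) (f1 a b) + pdist (focus_inv a b rho P2) (f1 a b)
    + pdist (focus_inv a b rho P3) (f1 a b)
    = rho^2 * (1 / pdist P1 (f1 a b) + 1 / pdist P2 (f1 a b) + 1 / pdist P3 (f1 a b))
  /\ pdist (focus_inv a b rho P1) (f1 a b) + pdist (focus_inv a b rho P2) (f1 a b)
    + pdist (focus_inv a b rho P3) (f1 a b)
    = rho^2 * (a^2 + b^2 + dl) / (a * b^2).
Proof.
  intros ha hb p1 p2 p3 K D1 D2 D3.
  assert (S : 1 / pdist P1 (f1 a b) + 1 / pdist P2 (f1 a b) + 1 / pdist P3 (f1 a b)
    = (a^2 + b^2 + dl) / (a * b^2)).
  { rewrite D1, D2, D3.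
    replace (1 / (a * (1 + e * X1)) + 1 / (a * (1 + e * X2)) + 1 / (a * (1 + e * X3)))
      with ((1/(1+e*X1) + 1/(1+e*X2) + 1/(1+e*X3)) / a) by (field; repeat split; lra).
    rewrite K. field. split; lra. }
  assert (q1 : 0 < pdist P1 (f1 a b)) by (rewrite D1; apply Rmult_lt_0_compat; lra).
  assert (q2 : 0 < pdist P2 (f1 a b)) by (rewrite D2; apply Rmult_lt_0_compat; lra).
  assert (q3 : 0 < pdist P3 (f1 a b)) by (rewrite D3; apply Rmult_lt_0_compat; lra).
  assert (S2 : pdist (focus_inv a b rho P1) (f1 a b) + pdist (focus_inv a b rho P2) (f1 a b)
    + pdist (focus_inv a b rho P3) (f1 a b)
    = rho^2 * (1 / pdist P1 (f1 a b) + 1 / pdist P2 (f1 a b) + 1 / pdist P3 (f1 a b))).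
  { rewrite !focus_inv_dist by auto. field. repeat split; lra. }
  split; [exact S|split; [exact S2|]].
  rewrite S2, S. field. split; lra.
Qed.

Theorem mainTheorem6 (a b rho : R) (P1 P2 P3 : pt) :
  a > b -> b > 0 -> rho > 0 ->
  three_periodic a b P1 P2 P3 ->
  1 / pdist P1 (f1 a b) + 1 / pdist P2 (f1 a b) + 1 / pdist P3 (f1 a b)
    = (a^2 + b^2 + delta a b) / (a * b^2)
  /\
  pdist (focus_inv a b rho P1) (f1 a b) + pdist (focus_inv a b rho P2) (f1 a b)
    + pdist (focus_inv a b rho P3) (f1 a b)
    = rho^2 * (1 / pdist P1 (f1 a b) + 1 / pdist P2 (f1 a b) + 1 / pdist P3 (f1 a b))
  /\
  pdist (focus_inv a b rho P1) (f1 a b) + pdist (focus_inv a b rho P2) (f1 a b)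
    + pdist (focus_inv a b rho P3) (f1 a b)
    = rho^2 * (a^2 + b^2 + delta a b) / (a * b^2).
Proof.
  intros hab hb hr hp.
  assert (ha : 0 < a) by lra.
  destruct P1 as [x1 y1]. destruct P2 as [x2 y2]. destruct P3 as [x3 y3].
  destruct hp as (e1 & e2 & e3 & n12 & n23 & n13 & b1 & b2 & b3).
  unfold on_ellipse in e1, e2, e3. cbn [fst snd] in e1, e2, e3.
  assert (d12 : ~(x1 = x2 /\ y1 = y2)) by (intros [u v]; apply n12; subst; auto).
  assert (d13 : ~(x1 = x3 /\ y1 = y3)) by (intros [u v]; apply n13; subst; auto).
  assert (d23 : ~(x2 = x3 /\ y2 = y3)) by (intros [u v]; apply n23; subst; auto).
  assert (d21 : ~(x2 = x1 /\ y2 = y1)) by (intros [u v]; apply d12; split; auto).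
  assert (bb1 := bis a b x1 y1 x2 y2 x3 y3 ha hb e1 d12 d13 b1).
  assert (bb2 := bis a b x2 y2 x3 y3 x1 y1 ha hb e2 d23 d21 b2).
  set (be := b^2/a^2).
  set (X1 := x1/a). set (X2 := x2/a). set (X3 := x3/a).
  set (Y1 := y1/b). set (Y2 := y2/b). set (Y3 := y3/b).
  assert (c1 : X1^2+Y1^2=1) by (apply circ; auto).
  assert (c2 : X2^2+Y2^2=1) by (apply circ; auto).
  assert (c3 : X3^2+Y3^2=1) by (apply circ; auto).
  assert (nd12 : ~(X1=X2/\Y1=Y2)) by (apply dist_norm; auto).
  assert (nd13 : ~(X1=X3/\Y1=Y3)) by (apply dist_norm; auto).
  assert (nd23 : ~(X2=X3/\Y2=Y3)) by (apply dist_norm; auto).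
  set (L12 := norm (psub (x2,y2) (x1,y1))) in *.
  set (L13 := norm (psub (x3,y3) (x1,y1))) in *.
  set (L23 := norm (psub (x3,y3) (x2,y2))) in *.
  assert (hL21 : norm (psub (x1,y1) (x2,y2)) = L12) by (unfold L12; apply norm_psub_sym).
  rewrite hL21 in bb2.
  assert (lp12 : 0 < L12) by (apply L_pos; auto).
  assert (lp13 : 0 < L13) by (apply L_pos; auto).
  assert (lp23 : 0 < L23) by (apply L_pos; auto).
  set (r := T X1 Y1 X2 Y2 / L12).
  assert (t12 : T X1 Y1 X2 Y2 = r * L12) by (unfold r; field; lra).
  assert (t13 : T X1 Y1 X3 Y3 = r * L13).
  { assert (E : T X1 Y1 X3 Y3 = T X1 Y1 X3 Y3 / L13 * L13) by (field; lra). rewrite E. fold X1 Y1 X3 Y3 in bb1. rewrite <- bb1. reflexivity. }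
  assert (t23 : T X2 Y2 X3 Y3 = r * L23).
  { assert (E : T X2 Y2 X3 Y3 = T X2 Y2 X3 Y3 / L23 * L23) by (field; lra). rewrite E. fold X1 Y1 X2 Y2 X3 Y3 in bb2. rewrite bb2.
    unfold r. f_equal. f_equal. unfold T. ring. }
  assert (rp : 0 < r).
  { unfold r. apply Rdiv_lt_0_compat; auto. apply T_pos; auto. }
  set (k := r^2 * a^2).
  assert (kp : 0 < k) by (unfold k; apply Rmult_lt_0_compat; apply pow_lt; lra).
  assert (Hsq : forall xa ya xb yb, norm (psub (xb,yb) (xa,ya)) ^ 2 = a^2 * DD be (xa/a) (ya/b) (xb/a) (yb/b))
    by (intros; apply L_sq; auto).
  assert (r12 : Rel be k X1 Y1 X2 Y2).
  { unfold Rel. rewrite t12. replace ((r*L12)^2) with (r^2 * L12^2) by ring. unfold L12. rewrite Hsq. unfold k, X1, X2, X3, Y1, Y2, Y3. ring. }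
  assert (r13 : Rel be k X1 Y1 X3 Y3).
  { unfold Rel. rewrite t13. replace ((r*L13)^2) with (r^2 * L13^2) by ring. unfold L13. rewrite Hsq. unfold k, X1, X2, X3, Y1, Y2, Y3. ring. }
  assert (r23 : Rel be k X2 Y2 X3 Y3).
  { unfold Rel. rewrite t23. replace ((r*L23)^2) with (r^2 * L23^2) by ring. unfold L23. rewrite Hsq. unfold k, X1, X2, X3, Y1, Y2, Y3. ring. }
  assert (hbe : 0 < be < 1) by (apply be_bounds; lra).
  set (e := foc_c a b / a).
  set (dh := delta a b / a^2).
  destruct (e_facts a b (conj hb hab)) as [he he0]. fold e be in he, he0.
  destruct (dh_facts a b (conj hb hab)) as [hdh hdh0]. fold dh be in hdh, hdh0.
  assert (K := core be k e dh X1 Y1 X2 Y2 X3 Y3 hbe kp he he0 hdh hdh0 c1 c2 c3 nd12 nd13 nd23 r12 r13 r23).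
  destruct (dist_f1 a b x1 y1 (conj hb hab) e1) as [D1 p1].
  destruct (dist_f1 a b x2 y2 (conj hb hab) e2) as [D2 p2].
  destruct (dist_f1 a b x3 y3 (conj hb hab) e3) as [D3 p3].
  fold e X1 X2 X3 in D1, D2, D3, p1, p2, p3.
  unfold dh, be in K.
  clearbody e X1 X2 X3.
  apply (finish a b rho e X1 X2 X3 (delta a b)); auto.
Qed.
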